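(* Let $P_1,\dots,P_n\subset\mathbb R^n$ be polytopes. The following are equivalent: (1) the Cayley polytope $\mathcal C(P_1,\dots,P_n)$ is a fully mixed $(2n-1)$-dimensional simplex; (2) $P_1,\dots,P_n$ are segments with linearly independent directions.
   Context: The Cayley polytope $\mathcal C(P_1,\dots,P_n)$ is the convex hull in $\mathbb R^n\times\mathbb R^n$ of $\bigcup_{i=1}^nP_i\times\{e_i\}$, with $e_1,\dots,e_n$ the standard basis of the second factor $\mathbb R^n$; it is called fully mixed if $\dim P_i\ge1$ for all $i$. A segment is a polytope of dimension exactly 1. *)

(* Defs.v *)
From mathcomp Require Import all_boot all_order all_algebra.
Set Implicit Arguments. Unset Strict Implicit. Unset Printing Implicit Defensive.
Import Order.TTheory GRing.Theory Num.Theory.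
Local Open Scope ring_scope.

Section Geometry.
Variable R : realFieldType.

Definition set_eqv (m : nat) (A B : 'rV[R]_m -> Prop) : Prop :=
  forall x, A x <-> B x.

Definition conv (m : nat) (S : 'rV[R]_m -> Prop) : 'rV[R]_m -> Prop :=
  fun x => exists (k : nat) (c : 'I_k -> R) (p : 'I_k -> 'rV[R]_m),
    [/\ forall i, 0 <= c i, \sum_i c i = 1, forall i, S (p i)
      & x = \sum_i c i *: p i].

Definition polytope (m : nat) (P : 'rV[R]_m -> Prop) : Prop :=
  exists V : seq 'rV[R]_m, V != [::] /\ set_eqv P (conv (fun x => x \in V)).

Definition aff_indep (m k : nat) (p : 'I_k -> 'rV[R]_m) : Prop :=
  forall c : 'I_k -> R, \sum_i c i = 0 -> \sum_i c i *: p i = 0 ->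
    forall i, c i = 0.

Definition adim (m : nat) (P : 'rV[R]_m -> Prop) (d : nat) : Prop :=
  (exists p : 'I_d.+1 -> 'rV[R]_m, (forall i, P (p i)) /\ aff_indep p) /\
  (forall p : 'I_d.+2 -> 'rV[R]_m, (forall i, P (p i)) -> ~ aff_indep p).

Definition segment (m : nat) (P : 'rV[R]_m -> Prop) : Prop :=
  polytope P /\ adim P 1.

Definition simplex (m d : nat) (C : 'rV[R]_m -> Prop) : Prop :=
  exists p : 'I_d.+1 -> 'rV[R]_m,
    aff_indep p /\ set_eqv C (conv (fun x => exists i, x = p i)).

Definition std_basis (n : nat) (i : 'I_n) : 'rV[R]_n := delta_mx 0 i.

Definition cayley (n : nat) (P : 'I_n -> 'rV[R]_n -> Prop) : 'rV[R]_(n + n) -> Prop :=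
  conv (fun z => exists (i : 'I_n) (x : 'rV[R]_n),
                   P i x /\ z = row_mx x (std_basis i)).

Definition fully_mixed (n : nat) (P : 'I_n -> 'rV[R]_n -> Prop) : Prop :=
  forall i, exists d, (1 <= d)%N /\ adim (P i) d.

End Geometry.

(* Main.v *)
Require Import Defs.
From mathcomp Require Import all_boot all_order all_algebra ring zify.
Set Implicit Arguments. Unset Strict Implicit. Unset Printing Implicit Defensive.
Import Order.TTheory GRing.Theory Num.Theory.
Local Open Scope ring_scope.

Section H.
Variable R : realFieldType.

Lemma split_l (m n : nat) (i : 'I_m) : split (lshift n i) = inl i.
Proof. exact: (unsplitK (inl _ i)). Qed.
Lemma split_r (m n : nat) (i : 'I_n) : split (rshift m i) = inr i.
Proof. exact: (unsplitK (inr _ i)). Qed.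

Lemma conv_pt m (S : 'rV[R]_m -> Prop) x : S x -> conv S x.
Proof.
move=> Sx; exists 1%N, (fun _ => 1), (fun _ => x); split.
- by move=> i; rewrite ler01.
- by rewrite big_ord1.
- by [].
- by rewrite big_ord1 scale1r.
Qed.

Lemma conv_mono m (S T : 'rV[R]_m -> Prop) x :
  (forall y, S y -> T y) -> conv S x -> conv T x.
Proof.
move=> ST [k [c [p [c0 c1 Sp ->]]]]; exists k, c, p; split => //.
by move=> i; apply: ST.
Qed.

Lemma conv_bin m (S : 'rV[R]_m -> Prop) x y t :
  conv S x -> conv S y -> 0 <= t -> t <= 1 -> conv S (t *: x + (1 - t) *: y).
Proof.
move=> [k1 [c [p [c0 c1 Sp ->]]]] [k2 [d [q [d0 d1 Sq ->]]]] t0 t1.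
exists (k1 + k2)%N,
  (fun i => match split i with inl a => t * c a | inr b => (1 - t) * d b end),
  (fun i => match split i with inl a => p a | inr b => q b end); split.
- move=> i; case: (split i) => a; apply: mulr_ge0 => //; by rewrite subr_ge0.
- rewrite big_split_ord /=.
  under eq_bigr => i _ do rewrite split_l.
  under [X in _ + X]eq_bigr => i _ do rewrite split_r.
  by rewrite -!mulr_sumr c1 d1 !mulr1 addrC subrK.
- by move=> i; case: (split i).
- apply/esym; rewrite big_split_ord /=.
  under eq_bigr => i _ do rewrite split_l.
  under [X in _ + X]eq_bigr => i _ do rewrite split_r.
  apply/esym; rewrite !scaler_sumr; congr (_ + _); apply: eq_bigr => i _; by rewrite scalerA.
Qed.

Lemma conv_idem_aux m (T : 'rV[R]_m -> Prop) k (c : 'I_k -> R) (p : 'I_k -> 'rV[R]_m) :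
  (forall i, 0 <= c i) -> \sum_i c i = 1 -> (forall i, conv T (p i)) ->
  conv T (\sum_i c i *: p i).
Proof.
elim: k c p => [|k IH] c p c0 c1 Tp.
  by move: c1; rewrite big_ord0 => /eqP; rewrite eq_sym oner_eq0.
rewrite big_ord_recr /=; move: c1; rewrite big_ord_recr /=.
set s := \sum_(i < k) c (widen_ord (leqnSn k) i) => c1.
have s0 : 0 <= s by apply: sumr_ge0 => i _.
have [/eqP sz|snz] := boolP (s == 0).
  have cz : forall i, c (widen_ord (leqnSn k) i) = 0.
    move=> i; move/eqP: sz; rewrite psumr_eq0 => [/allP H|j _ //].
    by apply/eqP; apply: (H i); rewrite mem_index_enum.
  under eq_bigr do rewrite cz scale0r.
  rewrite big1 // add0r; move: c1; rewrite sz add0r => ->; rewrite scale1r; exact: Tp.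
have -> : \sum_(i < k) c (widen_ord (leqnSn k) i) *: p (widen_ord (leqnSn k) i)
   = s *: \sum_(i < k) (c (widen_ord (leqnSn k) i) / s) *: p (widen_ord (leqnSn k) i).
  rewrite scaler_sumr; apply: eq_bigr => i _; rewrite scalerA; congr (_ *: _).
  by rewrite mulrC divfK.
have -> : c ord_max = 1 - s by rewrite -c1 addrAC subrr add0r.
apply: conv_bin.
- apply: IH => //.
  + by move=> i; apply: divr_ge0.
  + by rewrite -mulr_suml mulfV.
- exact: Tp.
- exact: s0.
- by rewrite -c1 lerDl.
Qed.

Lemma conv_idem m (S T : 'rV[R]_m -> Prop) x :
  (forall y, S y -> conv T y) -> conv S x -> conv T x.
Proof.
move=> ST [k [c [p [c0 c1 Sp ->]]]]; apply: conv_idem_aux => // i; exact: ST.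
Qed.



Lemma conv_range m N (p : 'I_N -> 'rV[R]_m) x :
  conv (fun y => exists j, y = p j) x <->
  exists w : 'I_N -> R, [/\ forall j, 0 <= w j, \sum_j w j = 1 & x = \sum_j w j *: p j].
Proof.
split.
  move=> [k [c [q [c0 c1 Sq ->]]]].
  have [f hf] := fin_all_exists Sq.
  exists (fun j => \sum_(l | f l == j) c l); split.
  - by move=> j; apply: sumr_ge0.
  - by rewrite -c1 (partition_big f predT) //.
  - rewrite (partition_big f predT) //=; apply: eq_bigr => j _.
    rewrite scaler_suml; apply: eq_bigr => l /eqP <-; by rewrite hf.
move=> [w [w0 w1 ->]]; exists N, w, p; split => // j; by exists j.
Qed.

Lemma row_mx_sum n1 n2 (I : Type) (r : seq I) (c : I -> R)
  (u : I -> 'rV[R]_n1) (v : I -> 'rV[R]_n2) :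
  \sum_(i <- r) c i *: row_mx (u i) (v i) =
  row_mx (\sum_(i <- r) c i *: u i) (\sum_(i <- r) c i *: v i).
Proof.
elim/big_rec3: _ => [|i y1 y2 y3 _ ->]; first by rewrite row_mx0.
by rewrite scale_row_mx add_row_mx.
Qed.

Lemma sum_basis n (g : 'I_n -> R) :
  \sum_i g i *: std_basis R i = \row_i g i.
Proof.
rewrite [RHS]row_sum_delta; apply: eq_bigr => i _; by rewrite mxE.
Qed.

Lemma seg_param m (a b x : 'rV[R]_m) :
  conv (fun y => y = a \/ y = b) x -> exists t, x = a + t *: (b - a).
Proof.
move=> [k [c [q [c0 c1 Sq ->]]]].
exists (\sum_l c l * (if q l == b then 1 else 0)).
have Eq : forall l, q l = a + (if q l == b then 1 else 0) *: (b - a).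
  move=> l; case: eqP => [->|]; first by rewrite scale1r addrC subrK.
  by case: (Sq l) => // -> _; rewrite scale0r addr0.
under eq_bigr => l _ do rewrite Eq scalerDr scalerA.
by rewrite big_split /= -scaler_suml c1 scale1r scaler_suml.
Qed.

Lemma adim_seg m (a b : 'rV[R]_m) : a != b ->
  adim (conv (fun y => y = a \/ y = b)) 1.
Proof.
move=> ab; split.
  exists (fun i : 'I_2 => if i == ord0 then a else b); split.
    by move=> i; apply: conv_pt; case: (i == ord0); [left|right].
  move=> c; rewrite !big_ord_recl !big_ord0 /= !addr0 => s0 s1.
  have c0 : c ord0 = - c (lift ord0 ord0) by rewrite -[c ord0](addrK (c (lift ord0 ord0))) s0 sub0r.
  move: s1; rewrite c0 scaleNr addrC -scalerBr => /eqP; rewrite scaler_eq0 subr_eq0.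
  rewrite [b == a]eq_sym (negbTE ab) orbF => /eqP c1z.
  move=> i; case: i => [[|[|k]] Hi] //.
  - by rewrite (_ : Ordinal Hi = ord0) ?c0 ?c1z ?oppr0 //; apply: val_inj.
  - by rewrite (_ : Ordinal Hi = lift ord0 ord0) ?c1z //; apply: val_inj.
move=> p Hp Hind.
have [t ht] := fin_all_exists (fun i => seg_param (Hp i)).
pose i0 : 'I_3 := ord0. pose i1 : 'I_3 := lift ord0 ord0. pose i2 : 'I_3 := lift ord0 (lift ord0 ord0).
have Sum3 : forall F : 'I_3 -> 'rV[R]_m, \sum_i F i = F i0 + F i1 + F i2.
  by move=> F; rewrite !big_ord_recl big_ord0 addr0 addrA.
have Sum3r : forall F : 'I_3 -> R, \sum_i F i = F i0 + F i1 + F i2.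
  by move=> F; rewrite !big_ord_recl big_ord0 addr0 addrA.
have [e01|n01] := eqVneq (t i0) (t i1).
  pose c := fun i : 'I_3 => if i == i0 then 1 else if i == i1 then -1 else (0:R).
  have := Hind c; rewrite Sum3r Sum3 /c /= => H.
  suff : (1:R) = 0 by move/eqP; rewrite oner_eq0.
  apply: (H _ _ i0).
    by rewrite addrN addr0.
  by rewrite !ht e01 scale1r scaleN1r scale0r addr0 subrr.
pose c := fun i : 'I_3 => if i == i0 then t i1 - t i2 else
   if i == i1 then t i2 - t i0 else t i0 - t i1.
have := Hind c; rewrite Sum3r Sum3 /c /= => H.
suff : t i0 - t i1 = 0 by move/eqP; rewrite subr_eq0 (negbTE n01).
apply: (H _ _ i2).
  ring.
rewrite !ht; apply/rowP => k; rewrite !mxE; ring.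
Qed.

Lemma aff_indep_cast m N M (E : N = M) (p : 'I_M -> 'rV[R]_m) :
  aff_indep p -> aff_indep (fun j => p (cast_ord E j)).
Proof.
case: M / E p => p H c s0; under eq_bigr => j _ do rewrite cast_ord_id; exact: H.
Qed.



Lemma rf_neq n (a b : 'I_n -> 'rV[R]_n) :
  row_free (\matrix_(i < n) (b i - a i)) -> forall i, a i != b i.
Proof.
move=> rf i; apply/eqP => eab.
have H : (delta_mx 0 i : 'rV[R]_n) *m (\matrix_(i < n) (b i - a i)) = 0 *m (\matrix_(i < n) (b i - a i)).
  by rewrite -rowE rowK eab subrr mul0mx.
move/(row_free_inj rf)/matrixP/(_ 0 i): H.
by rewrite !mxE !eqxx /= => /eqP; rewrite oner_eq0.
Qed.

Lemma dir21 n (n_gt0 : (0 < n)%N)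
    (P : 'I_n -> 'rV[R]_n -> Prop) (a b : 'I_n -> 'rV[R]_n)
    (heq : forall i, set_eqv (P i) (conv (fun x => x = a i \/ x = b i)))
    (rf : row_free (\matrix_(i < n) (b i - a i))) :
  fully_mixed P /\ simplex (2 * n).-1 (cayley P).
Proof.
have neq := rf_neq rf.
have adP : forall i, adim (P i) 1.
  move=> i; have [[p [Pp Ip]] H2] := adim_seg (neq i); split.
    by exists p; split => // j; apply/heq.
  by move=> p0 Pp0; apply: H2 => j; apply/heq.
split; first by move=> i; exists 1%N.
have E : (2 * n).-1.+1 = (n + n)%N by rewrite prednK; [rewrite mul2n addnn | rewrite muln_gt0 n_gt0].
pose q' := fun k : 'I_(n + n) => match split k with
  inl i => row_mx (a i) (std_basis R i) | inr i => row_mx (b i) (std_basis R i) end.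
exists (fun j => q' (cast_ord E j)); split.
  apply: aff_indep_cast => c s0 s1.
  move: s1; rewrite big_split_ord /=.
  under eq_bigr => i _ do rewrite /q' split_l.
  under [X in _ + X = _]eq_bigr => i _ do rewrite /q' split_r.
  rewrite !row_mx_sum add_row_mx -row_mx0 => /eq_row_mx [L Rt].
  move: Rt; rewrite -big_split /=.
  under eq_bigr => i _ do rewrite -scalerDl.
  rewrite sum_basis => /matrixP Rt.
  have ab0 : forall i, c (lshift n i) = - c (rshift n i).
    move=> i; have := Rt 0 i; rewrite !mxE => /eqP; by rewrite addr_eq0 => /eqP.
  have b0 : forall i, c (rshift n i) = 0.
    have : (\row_i c (rshift n i)) *m (\matrix_(i < n) (b i - a i)) = 0 *m (\matrix_(i < n) (b i - a i)).
      rewrite mul0mx mulmx_sum_row -[RHS]L -big_split /=; apply: eq_bigr => i _.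
      by rewrite rowK mxE ab0 scalerBr scaleNr addrC.
    move/(row_free_inj rf)/matrixP => H i; have := H 0 i; by rewrite !mxE.
  move=> k; rewrite -[k]splitK; case: (split k) => i /=.
    by rewrite ab0 b0 oppr0.
  exact: b0.
move=> x; split.
  apply: conv_idem => _ [i [y [Py ->]]].
  have [k [c [r [c0 c1 Sr ->]]]] := (heq i y).1 Py.
  have -> : std_basis R i = \sum_l c l *: std_basis R i by rewrite -scaler_suml c1 scale1r.
  rewrite -row_mx_sum; exists k, c, (fun l => row_mx (r l) (std_basis R i)); split => //.
  move=> l; case: (Sr l) => ->.
    by exists (cast_ord (esym E) (lshift n i)); rewrite cast_ordKV /q' split_l.
  by exists (cast_ord (esym E) (rshift n i)); rewrite cast_ordKV /q' split_r.
apply: conv_mono => _ [j ->]; rewrite /q'; case: (split _) => i.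
  exists i, (a i); split => //; apply/heq; apply: conv_pt; by left.
exists i, (b i); split => //; apply/heq; apply: conv_pt; by right.
Qed.



Lemma dir12 n (n_gt0 : (0 < n)%N)
    (P : 'I_n -> 'rV[R]_n -> Prop) (hP : forall i, polytope (P i))
    (fm : fully_mixed P) (sx : simplex (2 * n).-1 (cayley P)) :
  (forall i, segment (P i)) /\
   exists a b : 'I_n -> 'rV[R]_n,
     (forall i, set_eqv (P i) (conv (fun x => x = a i \/ x = b i))) /\
     row_free (\matrix_(i < n) (b i - a i)).
Proof.
move: sx => [p [Ip Ep]].
have Cp : forall x, cayley P x -> exists w, [/\ forall j, 0 <= w j, \sum_j w j = 1 & x = \sum_j w j *: p j].
  by move=> x h; apply/conv_range/Ep.
have SA : forall j, exists i x, P i x /\ p j = row_mx x (std_basis R i).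
  move=> j.
  have : cayley P (p j) by apply/Ep; apply: conv_pt; exists j.
  move=> [k [c [s [c0 c1 Ss Ej]]]].
  have [w hw] := fin_all_exists (fun l => Cp (s l) (conv_pt (Ss l))).
  have key : forall i, \sum_l c l * w l i = (i == j)%:R.
    move=> i; apply/eqP; rewrite -subr_eq0; apply/eqP; move: i.
    apply: Ip.
      rewrite sumrB exchange_big /=.
      have hw2 : forall l, \sum_i w l i = 1 by move=> l; case: (hw l).
      under eq_bigr => l _ do rewrite -mulr_sumr hw2 mulr1.
      rewrite c1 (bigD1 j) //= eqxx big1 ?addr0 ?subrr // => i /negbTE ->; done.
    under eq_bigr => i _ do rewrite scalerBl.
    rewrite sumrB [X in _ - X](bigD1 j) //= eqxx scale1r [X in _ - (_ + X)]big1 ?addr0; last by move=> i /negbTE ->; rewrite scale0r.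
    rewrite Ej; apply/eqP; rewrite subr_eq0; apply/eqP.
    under eq_bigr => i _ do rewrite scaler_suml.
    rewrite exchange_big /=; apply: eq_bigr => l _.
    case: (hw l) => _ _ ->; rewrite scaler_sumr; apply: eq_bigr => i _; by rewrite scalerA.
  have [l0 cl0] : exists l, c l != 0.
    case: (pickP (fun l => c l != 0)) => [l0 h|h]; first by exists l0.
    move: c1; rewrite big1 => [/eqP|l _]; first by rewrite eq_sym oner_eq0.
    by have := h l => /= /negbFE /eqP.
  have wz : forall i, i != j -> w l0 i = 0.
    move=> i ij; have := key i; rewrite (negbTE ij) => H.
    have nn : forall l, true -> 0 <= c l * w l i.
      by move=> l _; apply: mulr_ge0 => //; case: (hw l) => ->.
    have := @psumr_eq0P _ _ _ _ nn H l0 isT.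
    by move=> /eqP; rewrite mulf_eq0 (negbTE cl0) /= => /eqP.
  have wj : w l0 j = 1.
    case: (hw l0) => _ <- _; rewrite (bigD1 j) //= big1 ?addr0 // => i; exact: wz.
  have -> : p j = s l0.
    case: (hw l0) => _ _ ->; rewrite (bigD1 j) //= big1 ?addr0 ?wj ?scale1r //.
    by move=> i ij; rewrite wz // scale0r.
  exact: Ss.
have [sg hsg] := fin_all_exists SA.
have [X hX] := fin_all_exists hsg.
have PX : forall j, P (sg j) (X j) by move=> j; case: (hX j).
have pE : forall j, p j = row_mx (X j) (std_basis R (sg j)) by move=> j; case: (hX j).
have SB : forall i x, P i x -> exists w : 'I_((2 * n).-1.+1) -> R,
    [/\ forall l, 0 <= w l, \sum_l w l = 1, forall l, sg l != i -> w l = 0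
      & x = \sum_l w l *: X l].
  move=> i x Px.
  have : cayley P (row_mx x (std_basis R i)) by apply: conv_pt; exists i, x.
  move=> /Cp [w [w0 w1 Ew]].
  move: Ew; under eq_bigr => l _ do rewrite pE.
  rewrite row_mx_sum => /eq_row_mx [Ex Ee].
  exists w; split => //.
  have H : \sum_l w l * (1 - (sg l == i)%:R) = 0.
    have E1 : 1 = \sum_l w l * (sg l == i)%:R.
      move/matrixP: Ee => /(_ 0 i); rewrite /std_basis summxE !mxE !eqxx /= => E.
      by apply: (etrans E); apply: eq_bigr => l _; rewrite !mxE eqxx /= eq_sym.
    under eq_bigr => l _ do rewrite mulrBr mulr1.
    by rewrite sumrB w1 -E1 subrr.
  have nn : forall l, true -> 0 <= w l * (1 - (sg l == i)%:R).
    by move=> l _; apply: mulr_ge0 => //; case: (sg l == i); rewrite /= ?subrr ?subr0 ?ler01.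
  move=> l nl; have := @psumr_eq0P _ _ _ _ nn H l isT.
  by rewrite (negbTE nl) subr0 mulr1.
pose F i := [set l | sg l == i].
have two : forall i, (2 <= #|F i|)%N.
  move=> i; rewrite leqNgt; apply/negP => lt2.
  have [j0 hj0] : exists j0, forall l, sg l = i -> l = j0.
    move: lt2; rewrite ltnS leq_eqVlt ltnS leqn0 => /orP [/cards1P [j0 Fj0] | /eqP /cards0_eq F0].
      exists j0 => l sl; have : l \in F i by rewrite inE sl.
      by rewrite Fj0 inE => /eqP.
    exists ord0 => l sl; have : l \in F i by rewrite inE sl.
    by rewrite F0 inE.
  have allX : forall x, P i x -> x = X j0.
    move=> x Px; have [w [w0 w1 wz ->]] := SB i x Px.
    have wz' : forall l, l != j0 -> w l = 0.
      move=> l nl; apply: wz; apply: contra nl => /eqP /hj0 ->; done.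
    have wj : w j0 = 1 by rewrite -w1 (bigD1 j0) //= big1 ?addr0 // => l nl; rewrite wz'.
    rewrite (bigD1 j0) //= big1 ?addr0 ?wj ?scale1r // => l nl; by rewrite wz' // scale0r.
  have [d [d1 [[u [Pu Iu]] _]]] := fm i.
  pose i1 : 'I_d.+1 := Ordinal (d1 : (1 < d.+1)%N).
  have i10 : i1 != ord0 by [].
  pose c := fun k : 'I_d.+1 => if k == ord0 then 1 else if k == i1 then -1 else (0:R).
  suff : c ord0 = 0 by rewrite /c eqxx => /eqP; rewrite oner_eq0.
  apply: Iu.
    rewrite (bigD1 ord0) //= (bigD1 i1) //= big1 ?addr0 /c ?eqxx ?(negbTE i10) ?addrN //.
    by move=> k /andP [k0 k1]; rewrite (negbTE k0) (negbTE k1).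
  rewrite (bigD1 ord0) //= (bigD1 i1) //= big1 ?addr0 /c ?eqxx ?(negbTE i10).
    by rewrite scale1r scaleN1r (allX _ (Pu ord0)) (allX _ (Pu i1)) subrr.
  by move=> k /andP [k0 k1]; rewrite (negbTE k0) (negbTE k1) scale0r.
have EN : (2 * n).-1.+1 = (2 * n)%N by rewrite prednK // muln_gt0 n_gt0.
have sumF : (\sum_i #|F i|)%N = (2 * n)%N.
  apply: (etrans _ EN); apply: (etrans _ (card_ord ((2 * n).-1.+1))).
  rewrite -sum1_card (partition_big sg predT) //=.
  by apply: eq_bigr => i _; rewrite sum1dep_card.
have two_eq : forall i, (#|F i| = 2)%N.
  move=> i; apply/eqP; rewrite eqn_leq two andbT leqNgt; apply/negP => gt2.
  move: sumF; rewrite (bigD1 i) //= => H2.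
  have H1 : (\sum_(k < n | k != i) 2 <= \sum_(k < n | k != i) #|F k|)%N.
    by apply: leq_sum => k _; exact: two.
  have H3 : (\sum_(k < n) 2 = 2 + \sum_(k < n | k != i) 2)%N by rewrite (bigD1 i).
  have H4 : (\sum_(k < n) 2 = n * 2)%N by rewrite sum_nat_const card_ord.
  match type of H2 with (_ + ?S)%N = _ => have E : S = (\sum_(k < n | k != i) #|F k|)%N by [] end.
  rewrite E in H2.
  move: H1 H2 H3 H4 gt2.
  generalize (\sum_(k < n | k != i) #|F k|)%N (\sum_(k < n | k != i) 2)%N (\sum_(k < n) 2)%N.
  move=> a b c H1 H2 H3 H4 H5.
  match type of H2 with (?X + _)%N = _ => have E2 : X = #|F i| by [] end.
  rewrite E2 in H2; move: H2 H5; generalize (#|F i|) => f H2 H5; clear -H1 H2 H3 H4 H5; lia.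
have ex2 : forall i, exists x y, x != y /\ F i = [set x; y].
  by move=> i; apply/cards2P; rewrite two_eq.
have [j1 hj1] := fin_all_exists ex2.
have [j2 hj] := fin_all_exists hj1.
have sgF : forall i l, (l \in F i) = (sg l == i) by move=> i l; rewrite inE.
have sg1 : forall i, sg (j1 i) = i.
  by move=> i; apply/eqP; rewrite -sgF (hj i).2 set21.
have sg2 : forall i, sg (j2 i) = i.
  by move=> i; apply/eqP; rewrite -sgF (hj i).2 set22.
have fib : forall l, l = j1 (sg l) \/ l = j2 (sg l).
  by move=> l; apply/set2P; rewrite -(hj (sg l)).2 sgF.
have fsum : forall (V : nmodType) (G : 'I_((2 * n).-1.+1) -> V),
    \sum_l G l = \sum_i (G (j1 i) + G (j2 i)).
  move=> V G; rewrite (partition_big sg predT) //=; apply: eq_bigr => i _.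
  rewrite (eq_bigl (mem (F i))) => [|l]; last by rewrite /= sgF.
  rewrite (hj i).2 big_setU1 ?big_set1 // in_set1; exact: (hj i).1.
pose a := fun i => X (j1 i).
pose b := fun i => X (j2 i).
have Pab : forall i, set_eqv (P i) (conv (fun x => x = a i \/ x = b i)).
  move=> i x; split.
    move=> Px; have [w [w0 w1 wz ->]] := SB i x Px.
    exists ((2 * n).-1.+1), w, (fun l => if sg l == i then X l else a i); split => //.
      move=> l; case: eqP => [sl|_]; last by left.
      by case: (fib l) => e; rewrite e sl; [left|right].
    apply: eq_bigr => l _; case: eqP => // /eqP nl; by rewrite wz // !scale0r.
  move=> Hx; have [V [_ EV]] := hP i; apply/EV; apply: conv_idem Hx => y [->|->]; apply/EV.
    by have := PX (j1 i); rewrite sg1.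
  by have := PX (j2 i); rewrite sg2.
have rf : row_free (\matrix_(i < n) (b i - a i)).
  apply: inj_row_free => v Hv.
  pose c := fun l => if l == j2 (sg l) then v 0 (sg l) else - v 0 (sg l).
  have cj1 : forall i, c (j1 i) = - v 0 i by move=> i; rewrite /c sg1 (negbTE (hj i).1).
  have cj2 : forall i, c (j2 i) = v 0 i by move=> i; rewrite /c sg2 eqxx.
  have H := Ip c.
  have cz : forall l, c l = 0.
    apply: H.
      by rewrite fsum big1 // => i _; rewrite cj1 cj2 addNr.
    rewrite fsum.
    under eq_bigr => i _ do rewrite cj1 cj2 !pE sg1 sg2 scaleNr addrC -scalerBr opp_row_mx add_row_mx subrr.
    rewrite row_mx_sum [X in row_mx _ X]big1 => [|i _]; last exact: scaler0.
    have -> : (0 : 'rV[R]_(n + n)) = row_mx 0 0 by rewrite row_mx0.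
    congr row_mx; apply: (etrans _ Hv); rewrite mulmx_sum_row; apply: eq_bigr => i _.
    by rewrite rowK.
  apply/rowP => i; rewrite mxE -cj2; exact: cz.
split.
  move=> i; split; first exact: hP.
  have [[q [Pq Iq]] H2] := adim_seg (rf_neq rf i).
  split; first by exists q; split => // j; apply/Pab.
  by move=> q0 Pq0; apply: H2 => j; apply/Pab.
by exists a, b; split.
Qed.

End H.

Unset Implicit Arguments.
Set Strict Implicit.

Theorem lemma2p4 (R : realFieldType) (n : nat) (n_gt0 : (0 < n)%N)
    (P : 'I_n -> 'rV[R]_n -> Prop) (hP : forall i, polytope (P i)) :
  (fully_mixed P /\ simplex (2 * n).-1 (cayley P)) <->
  ((forall i, segment (P i)) /\
   exists a b : 'I_n -> 'rV[R]_n,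
     (forall i, set_eqv (P i) (conv (fun x => x = a i \/ x = b i))) /\
     row_free (\matrix_(i < n) (b i - a i))).
Proof.
split.
  by move=> [fm sx]; apply: dir12.
move=> [_ [a [b [heq rf]]]]; exact: (@dir21 R n n_gt0 P a b heq rf).
Qed.
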